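(* Let $n\ge 4$ and let $W$ be a euclidean metric Lie $n$-algebra, written as an orthogonal direct sum of ideals $W=\mathfrak{a}\oplus\mathfrak{s}^{(n)}_1\oplus\dots\oplus\mathfrak{s}^{(n)}_q$, where $\mathfrak{a}$ is abelian and each $\mathfrak{s}^{(n)}_i$ is a copy of the simple euclidean Lie $n$-algebra $\mathfrak{s}^{(n)}$. Suppose $W$ additionally carries an alternating $(n-1)$-linear bracket $[x_1,\dots,x_{n-1}]$ making it a Lie $(n-1)$-algebra, such that for every $x_1,\dots,x_{n-2}\in W$ the adjoint map $\mathrm{ad}_{x_1,\dots,x_{n-2}}:y\mapsto[x_1,\dots,x_{n-2},y]$ is skew-symmetric with respect to the inner product of $W$ and is a derivation of the $n$-bracket of $W$. Then each $\mathrm{ad}_{x_1,\dots,x_{n-2}}$ preserves each of the summands $\mathfrak{a},\mathfrak{s}^{(n)}_1,\dots,\mathfrak{s}^{(n)}_q$; consequently each of these summands is an ideal of the Lie $(n-1)$-algebra $(W,[\cdot,\dots,\cdot])$.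
   Context: All vector spaces are real and finite-dimensional. For $k\ge 2$, a Lie $k$-algebra is a vector space with an alternating $k$-linear bracket such that each $\mathrm{ad}_{x_1,\dots,x_{k-1}}:y\mapsto[x_1,\dots,x_{k-1},y]$ is a derivation of the bracket; an ideal is a subspace $I$ with $[I,W,\dots,W]\subset I$; it is abelian if all brackets vanish. A metric Lie $k$-algebra has a nondegenerate symmetric bilinear form for which all $\mathrm{ad}$ maps are skew-symmetric; euclidean means the form is positive definite. For $k\ge 3$, $\mathfrak{s}^{(k)}$ denotes the $(k+1)$-dimensional Lie $k$-algebra with basis $\boldsymbol e_1,\dots,\boldsymbol e_{k+1}$ and bracket $[\boldsymbol e_1,\dots,\widehat{\boldsymbol e_i},\dots,\boldsymbol e_{k+1}]=(-1)^i\boldsymbol e_i$ (hat denotes omission), with an inner product making this basis orthogonal with all $\langle\boldsymbol e_i,\boldsymbol e_i\rangle$ equal to the same positive number. *)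

(* Defs.v *)
From HB Require Import structures.
From mathcomp Require Import all_boot all_order all_algebra.
Set Implicit Arguments. Unset Strict Implicit. Unset Printing Implicit Defensive.
Import Order.TTheory GRing.Theory Num.Theory.
Local Open Scope ring_scope.

Section NAlg.
Variables (R : rcfType) (V : vectType R).

Definition upd (k : nat) (x : 'I_k -> V) (i : 'I_k) (u : V) : 'I_k -> V :=
  fun j => if j == i then u else x j.

Definition snoc (k : nat) (x : 'I_k -> V) (y : V) : 'I_k.+1 -> V :=
  fun j => match unlift ord_max j with Some j' => x j' | None => y end.

Definition multilinear (k : nat) (f : ('I_k -> V) -> V) : Prop :=
  forall (x : 'I_k -> V) (i : 'I_k) (a : R) (u v : V),
    f (upd x i (a *: u + v)) = a *: f (upd x i u) + f (upd x i v).

Definition alternating (k : nat) (f : ('I_k -> V) -> V) : Prop :=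
  forall (x : 'I_k -> V) (i j : 'I_k), i != j -> x i = x j -> f x = 0.

Definition ad (k : nat) (f : ('I_k.+1 -> V) -> V) (x : 'I_k -> V) : V -> V :=
  fun y => f (snoc x y).

Definition derivation (m : nat) (D : V -> V) (f : ('I_m -> V) -> V) : Prop :=
  forall x : 'I_m -> V, D (f x) = \sum_(i < m) f (upd x i (D (x i))).

Definition lie_alg (k : nat) (f : ('I_k.+1 -> V) -> V) : Prop :=
  [/\ multilinear f, alternating f & forall x, derivation (ad f x) f].

Definition euclidean_form (form : V -> V -> R) : Prop :=
  [/\ forall a u v w, form (a *: u + v) w = a * form u w + form v w,
      forall u v, form u v = form v u
    & forall u, u != 0 -> 0 < form u u].

Definition skew_adj (form : V -> V -> R) (D : V -> V) : Prop :=
  forall y z, form (D y) z = - form y (D z).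

Definition is_ideal (k : nat) (f : ('I_k.+1 -> V) -> V) (I : {vspace V}) : Prop :=
  forall x : 'I_k.+1 -> V, x ord0 \in I -> f x \in I.

Definition is_abelian (m : nat) (f : ('I_m -> V) -> V) (I : {vspace V}) : Prop :=
  forall x : 'I_m -> V, (forall i, x i \in I) -> f x = 0.

(* S (with restricted bracket and inner product) is a copy of the euclidean
   Lie n-algebra s^(n), n = k+2: it has a basis b_0,...,b_{n} (0-based, so
   b_j corresponds to e_{j+1}), orthogonal with all norms equal to c > 0, and
   [b_0,...,^b_j,...,b_n] = (-1)^(j+1) b_j. *)
Definition sn_copy (k : nat) (f : ('I_k.+2 -> V) -> V)
    (form : V -> V -> R) (S : {vspace V}) : Prop :=
  exists (b : 'I_k.+3 -> V) (c : R),
    [/\ 0 < c,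
        basis_of S (codom b),
        forall i j, form (b i) (b j) = (if i == j then c else 0)
      & forall j : 'I_k.+3, f (fun l : 'I_k.+2 => b (lift j l)) = (-1) ^+ j.+1 *: b j].

End NAlg.

(* Main.v *)
Require Import Defs.
From HB Require Import structures.
From mathcomp Require Import all_boot all_order all_algebra.
From Stdlib Require Import FunctionalExtensionality.
Import Order.TTheory GRing.Theory Num.Theory.
Local Open Scope ring_scope.
Set Implicit Arguments. Unset Strict Implicit.

Lemma upd_comm (R : rcfType) (V : vectType R) m (x : 'I_m -> V) i j u v :
  i != j -> upd (upd x j v) i u = upd (upd x i u) j v.
Proof.
move=> ij; apply: functional_extensionality => l; rewrite /upd.
case: (eqVneq l i) => [->|li]; first by rewrite (negbTE ij).
by [].
Qed.

Lemma upd_self (R : rcfType) (V : vectType R) m (x : 'I_m -> V) i :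
  upd x i (x i) = x.
Proof.
by apply: functional_extensionality => l; rewrite /upd; case: eqP => [->|].
Qed.

Lemma ml_add (R : rcfType) (V : vectType R) m (f : ('I_m -> V) -> V) :
  multilinear f -> forall x i u v, f (upd x i (u + v)) = f (upd x i u) + f (upd x i v).
Proof. by move=> ml x i u v; have := ml x i 1 u v; rewrite !scale1r. Qed.

Lemma alt_swap (R : rcfType) (V : vectType R) m (f : ('I_m -> V) -> V) :
  multilinear f -> alternating f -> forall x i j, i != j ->
  f (upd (upd x j (x i)) i (x j)) = - f x.
Proof.
move=> ml al x i j ij.
pose g u v := f (upd (upd x j v) i u).
have gl : forall u u' v, g (u + u') v = g u v + g u' v.
  by move=> u u' v; rewrite /g ml_add.
have gr : forall u v v', g u (v + v') = g u v + g u v'.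
  by move=> u v v'; rewrite /g !(upd_comm _ _ _ ij) ml_add.
have g0 : forall w, g w w = 0.
  move=> w; rewrite /g; apply: (al _ i j ij).
  by rewrite /upd eqxx eq_sym (negbTE ij) eqxx.
have : g (x i + x j) (x i + x j) = 0 by apply: g0.
rewrite gl !gr !g0 add0r addr0 => /eqP; rewrite addr_eq0 => /eqP H.
have -> : f (upd (upd x j (x i)) i (x j)) = g (x j) (x i) by [].
by rewrite -(opprK (g (x j) (x i))) -H /g !upd_self.
Qed.

Lemma ideal_slot (R : rcfType) (V : vectType R) m (f : ('I_m.+1 -> V) -> V)
  (I : {vspace V}) : multilinear f -> alternating f -> is_ideal f I ->
  forall z l, z l \in I -> f z \in I.
Proof.
move=> ml al id z l zl.
case: (eqVneq l ord0) => [e|ne]; first by apply: id; rewrite -e.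
have H := alt_swap ml al z ne.
rewrite -[f z]opprK -H rpredN; apply: id.
by rewrite /upd eq_sym (negbTE ne) eqxx.
Qed.

Lemma snoc_upd (R : rcfType) (V : vectType R) m (x : 'I_m -> V) y :
  snoc x y = upd (snoc x 0) ord_max y.
Proof.
apply: functional_extensionality => j; rewrite /upd /snoc.
case: unliftP => [j' ->|->]; last by rewrite eqxx.
case: eqP => // E; have := neq_lift ord_max j'; by rewrite E eqxx.
Qed.

Lemma snoc_eta (R : rcfType) (V : vectType R) m (y : 'I_m.+1 -> V) :
  y = snoc (fun j => y (widen_ord (leqnSn m) j)) (y ord_max).
Proof.
apply: functional_extensionality => j; rewrite /snoc.
case: unliftP => [j' ->|-> //]; congr y; apply: val_inj => /=.
by rewrite /bump leqNgt ltn_ord.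
Qed.

Lemma ad_lin (R : rcfType) (V : vectType R) m (f : ('I_m.+1 -> V) -> V) x :
  multilinear f -> forall a u v, ad f x (a *: u + v) = a *: ad f x u + ad f x v.
Proof. by move=> ml a u v; rewrite /ad (snoc_upd x (a *: u + v)) (snoc_upd x u) (snoc_upd x v) ml. Qed.

Lemma ad_add (R : rcfType) (V : vectType R) m (f : ('I_m.+1 -> V) -> V) x :
  multilinear f -> forall u v, ad f x (u + v) = ad f x u + ad f x v.
Proof. by move=> ml u v; have := ad_lin x ml 1 u v; rewrite !scale1r. Qed.

Lemma ad_0 (R : rcfType) (V : vectType R) m (f : ('I_m.+1 -> V) -> V) x :
  multilinear f -> ad f x 0 = 0.
Proof.
by move=> ml; apply: (addrI (ad f x 0)); rewrite -ad_add // !addr0.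
Qed.

Lemma ad_scale (R : rcfType) (V : vectType R) m (f : ('I_m.+1 -> V) -> V) x :
  multilinear f -> forall a u, ad f x (a *: u) = a *: ad f x u.
Proof.
by move=> ml a u; rewrite -[a *: u]addr0 ad_lin // ad_0 // addr0.
Qed.

Lemma ideal_of_pres (R : rcfType) (V : vectType R) m (f : ('I_m.+1 -> V) -> V)
  (I : {vspace V}) : (0 < m)%N -> multilinear f -> alternating f ->
  (forall x v, v \in I -> ad f x v \in I) -> is_ideal f I.
Proof.
move=> hm ml al pres x x0.
have ne : (ord_max : 'I_m.+1) != ord0.
  by apply/eqP => /(congr1 val) /= m0; rewrite m0 in hm.
have := alt_swap ml al x ne => H.
rewrite -[f x]opprK -H rpredN.
set y := upd _ _ _.
rewrite (snoc_eta y); apply: pres.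
by rewrite /y /upd eqxx.
Qed.

Lemma form0l (R : rcfType) (V : vectType R) (form : V -> V -> R) :
  euclidean_form form -> forall w, form 0 w = 0.
Proof.
case=> f1 _ _ w; have := f1 1 0 0 w; rewrite scale1r addr0 mul1r.
by rewrite -{1}[form 0 w]addr0 => /addrI ->.
Qed.

Lemma formDl (R : rcfType) (V : vectType R) (form : V -> V -> R) :
  euclidean_form form -> forall u v w, form (u + v) w = form u w + form v w.
Proof. by case=> f1 _ _ u v w; have := f1 1 u v w; rewrite scale1r mul1r. Qed.

Lemma orth_sum (R : rcfType) (V : vectType R) (form : V -> V -> R) q
  (S : 'I_q -> {vspace V}) u : euclidean_form form ->
  (forall i t, t \in S i -> form u t = 0) ->
  forall t, t \in (\sum_(i < q) S i)%VS -> form u t = 0.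
Proof.
move=> fe H; apply: (big_ind (fun U : {vspace V} => forall t, t \in U -> form u t = 0)).
- move=> t; rewrite memv0 => /eqP ->; have [_ sy _] := fe.
  by rewrite sy form0l.
- move=> U1 U2 H1 H2 t /memv_addP [u1 h1 [v1 h2 ->]].
  have [_ sy _] := fe.
  by rewrite sy formDl // -!(sy u) H1 // H2 // addr0.
- by move=> i _; apply: H.
Qed.

Lemma span_pres (R : rcfType) (V : vectType R) (D : V -> V) (U : {vspace V})
  (X : seq V) : (forall a u v, D (a *: u + v) = a *: D u + D v) ->
  (forall x, x \in X -> D x \in U) -> forall v, v \in <<X>>%VS -> D v \in U.
Proof.
move=> lin H.
have Dadd : forall u v, D (u + v) = D u + D v.
  by move=> u v; have := lin 1 u v; rewrite !scale1r.
have D0 : D 0 = 0.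
  by apply: (addrI (D 0)); rewrite -Dadd !addr0.
rewrite span_def big_seq.
apply: (big_ind (fun W : {vspace V} => forall v, v \in W -> D v \in U)).
- by move=> v; rewrite memv0 => /eqP ->; rewrite D0 mem0v.
- move=> U1 U2 H1 H2 t /memv_addP [u1 h1 [v1 h2 ->]].
  by rewrite Dadd; apply: memvD; [apply: H1 | apply: H2].
- move=> x hx v /vlineP [a ->].
  by have := lin a x 0; rewrite !addr0 D0 addr0 => ->; apply: memvZ; apply: H.
Qed.

Theorem lemma3p0 (R : rcfType) (W : vectType R) (k : nat) (hk : (2 <= k)%N)
  (form : W -> W -> R) (brn : ('I_k.+2 -> W) -> W) (brm : ('I_k.+1 -> W) -> W)
  (A : {vspace W}) (q : nat) (S : 'I_q -> {vspace W}) :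
  euclidean_form form ->
  lie_alg brn ->
  (forall x : 'I_k.+1 -> W, skew_adj form (ad brn x)) ->
  (A + \sum_(i < q) S i)%VS = fullv ->
  directv (A + \sum_(i < q) S i)%VS ->
  (forall (i : 'I_q) u v, u \in A -> v \in S i -> form u v = 0) ->
  (forall (i j : 'I_q) u v, i != j -> u \in S i -> v \in S j -> form u v = 0) ->
  is_ideal brn A -> is_abelian brn A ->
  (forall i, is_ideal brn (S i)) ->
  (forall i, sn_copy brn form (S i)) ->
  lie_alg brm ->
  (forall x : 'I_k -> W, skew_adj form (ad brm x)) ->
  (forall x : 'I_k -> W, derivation (ad brm x) brn) ->
  (forall x : 'I_k -> W,
     (forall v, v \in A -> ad brm x v \in A) /\
     (forall (i : 'I_q) v, v \in S i -> ad brm x v \in S i)) /\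
  is_ideal brm A /\ (forall i : 'I_q, is_ideal brm (S i)).
Proof.
move=> fe lien skn full dir oAS oSS idA abA idS sn liem skm derm.
have [mln aln _] := lien.
have [mlm alm _] := liem.
have pres : forall x : 'I_k -> W,
     (forall v, v \in A -> ad brm x v \in A) /\
     (forall (i : 'I_q) v, v \in S i -> ad brm x v \in S i).
  move=> x.
  have HS : forall (i : 'I_q) v, v \in S i -> ad brm x v \in S i.
    move=> i; have [b [c [c0 bas orth brb]]] := sn i.
    rewrite -(span_basis bas); apply: span_pres; first exact: ad_lin.
    move=> x0 /codomP [j ->].
    have bS : forall l, b l \in S i.
      by move=> l; apply: (basis_mem bas); apply: codom_f.
    set s : R := (-1) ^+ j.+1.
    have -> : b j = s *: brn (fun l : 'I_k.+2 => b (lift j l)).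
      by rewrite brb scalerA -expr2 sqrr_sign scale1r.
    rewrite ad_scale //; apply: memvZ.
    rewrite derm; apply: memv_suml => l _.
    set l' : 'I_k.+2 := if l == ord0 then ord_max else ord0.
    have nl : l' != l.
      rewrite /l'; case: (eqVneq l ord0) => [->|ln] //.
      by rewrite eq_sym.
    rewrite (span_basis bas); apply: (@ideal_slot _ _ _ _ _ mln aln (idS i) _ l').
    by rewrite /upd (negbTE nl) bS.
  split => //.
  move=> v vA.
  have : ad brm x v \in (A + \sum_(i < q) S i)%VS by rewrite full memvf.
  case/memv_addP => a aA [t tS Ht].
  have o1 : form (ad brm x v) t = 0.
    apply: (orth_sum fe _ tS) => i s sS.
    by rewrite skm (oAS i v _ vA (HS i s sS)) oppr0.
  have o2 : form a t = 0 by apply: (orth_sum fe _ tS) => i s sS; apply: (oAS i).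
  have ott : form t t = 0 by move: o1; rewrite Ht formDl // o2 add0r.
  have t0 : t = 0.
    case: (eqVneq t 0) => // tn; have [_ _ pd] := fe.
    by have := pd t tn; rewrite ott ltxx.
  by rewrite Ht t0 addr0.
have hk0 : (0 < k)%N by apply: leq_trans hk.
split => //; split.
  by apply: ideal_of_pres => // x v; case: (pres x) => H _; apply: H.
by move=> i; apply: ideal_of_pres => // x v; case: (pres x) => _ H; apply: H.
Qed.
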